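(* For every $\delta$-algebra $A$, the homomorphism $\eta_A\colon A\to C(\mathrm{Max}\,A,[0,1])$, $a\mapsto\hat a$, is an epimorphism in the category $\Delta$ of $\delta$-algebras and $\delta$-homomorphisms.
   Context: An MV-algebra is an algebra $(A,\oplus,\neg,0)$ of type $(2,1,0)$ such that $(A,\oplus,0)$ is a commutative monoid, $\neg\neg a=a$, $a\oplus\neg 0=\neg 0$, and $\neg(\neg a\oplus b)\oplus b=\neg(\neg b\oplus a)\oplus a$. Derived operations: $1:=\neg 0$, $a\odot b:=\neg(\neg a\oplus\neg b)$, $a\ominus b:=a\odot\neg b$, $a\vee b:=\neg(\neg a\oplus b)\oplus b$ (join of a lattice order $\le$), $d(a,b):=(a\ominus b)\oplus(b\ominus a)$. Let $\mathcal{L}=\{\delta,\oplus,\neg,0\}$ of type $(\omega,2,1,0)$; $\tfrac12(x):=\delta(x,0,0,\dots)$. A $\delta$-algebra is an $\mathcal{L}$-algebra whose MV-reduct is an MV-algebra and satisfying for all $x,y,\vec x,\vec y$: (i) $d(\delta(\vec x),\delta(x_1,0,0,\dots))=\delta(0,x_2,x_3,\dots)$; (ii) $\tfrac12(\delta(\vec x))=\delta(\tfrac12(x_1),\tfrac12(x_2),\dots)$; (iii) $\delta(x,x,\dots)=x$; (iv) $\delta(0,\vec x)=\tfrac12(\delta(\vec x))$; (v) $\delta(\vec x)\le\delta(x_1\oplus y_1,x_2\oplus y_2,\dots)$; (vi) $\tfrac12(x\ominus y)=\tfrac12(x)\ominus\tfrac12(y)$. A $\delta$-homomorphism is a map preserving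 $\delta,\oplus,\neg,0$. $[0,1]$ is the standard $\delta$-algebra with $x\oplus y=\min\{1,x+y\}$, $\neg x=1-x$, $\delta(\vec x)=\sum_i x_i/2^i$. For a compact Hausdorff space $X$, $C(X,[0,1])$ is the $\delta$-algebra of continuous maps $X\to[0,1]$ with pointwise MV-operations and $\delta(\vec{\mathbf g}):=\sum_{i\ge1}\mathbf g_i/2^i$ (a uniformly convergent series). For a $\delta$-algebra $A$, $\mathrm{Max}\,A$ is the set of MV-algebra homomorphisms $A\to[0,1]$ with the subspace topology of $[0,1]^A$ (compact Hausdorff); for $a\in A$, $\hat a\colon\mathrm{Max}\,A\to[0,1]$, $\hat a(h):=h(a)$. *)

(* Defs.v *)
From Stdlib Require Import Reals List.
From Coquelicot Require Import Coquelicot.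
Open Scope R_scope.

(* Raw signature of type (omega,2,1,0).  Sequences (x_1,x_2,...) are
   represented as s : nat -> A with s 0 = x_1. *)
Record deltaSig := {
  dcar :> Type;
  dplus : dcar -> dcar -> dcar;
  dneg : dcar -> dcar;
  dzero : dcar;
  ddelta : (nat -> dcar) -> dcar
}.

Section Derived.
Variable A : deltaSig.
Definition done : A := dneg A (dzero A).
Definition dodot (a b : A) : A := dneg A (dplus A (dneg A a) (dneg A b)).
Definition dominus (a b : A) : A := dodot a (dneg A b).
Definition djoin (a b : A) : A := dplus A (dneg A (dplus A (dneg A a) b)) b.
Definition dle (a b : A) : Prop := djoin a b = b.
Definition ddist (a b : A) : A := dplus A (dominus a b) (dominus b a).
Definition dhalf (x : A) : A :=
  ddelta A (fun n => match n with O => x | S _ => dzero A end).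

Definition isMV : Prop :=
  (forall x y z : A, dplus A x (dplus A y z) = dplus A (dplus A x y) z) /\
  (forall x y : A, dplus A x y = dplus A y x) /\
  (forall x : A, dplus A x (dzero A) = x) /\
  (forall x : A, dneg A (dneg A x) = x) /\
  (forall x : A, dplus A x (dneg A (dzero A)) = dneg A (dzero A)) /\
  (forall x y : A, dplus A (dneg A (dplus A (dneg A x) y)) y
                 = dplus A (dneg A (dplus A (dneg A y) x)) x).

Definition isDeltaAlgebra : Prop :=
  isMV /\
  (* (i) *)
  (forall s : nat -> A,
     ddist (ddelta A s) (ddelta A (fun n => match n with O => s O | S _ => dzero A end))
     = ddelta A (fun n => match n with O => dzero A | S _ => s n end)) /\
  (* (ii) *)
  (forall s : nat -> A, dhalf (ddelta A s) = ddelta A (fun n => dhalf (s n))) /\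
  (* (iii) *)
  (forall x : A, ddelta A (fun _ => x) = x) /\
  (* (iv) *)
  (forall s : nat -> A,
     ddelta A (fun n => match n with O => dzero A | S m => s m end) = dhalf (ddelta A s)) /\
  (* (v) *)
  (forall s t : nat -> A, dle (ddelta A s) (ddelta A (fun n => dplus A (s n) (t n)))) /\
  (* (vi) *)
  (forall x y : A, dhalf (dominus x y) = dominus (dhalf x) (dhalf y)).
End Derived.

Record deltaAlgebra := {
  dsig :> deltaSig;
  daxioms : isDeltaAlgebra dsig
}.

Definition uplus (x y : R) : R := Rmin 1 (x + y).
Definition uneg (x : R) : R := 1 - x.

Definition isMVhomTo01 (A : deltaSig) (h : A -> R) : Prop :=
  (forall a, 0 <= h a <= 1) /\
  (forall a b, h (dplus A a b) = uplus (h a) (h b)) /\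
  (forall a, h (dneg A a) = uneg (h a)) /\
  h (dzero A) = 0.

Definition MaxA (A : deltaSig) : Type := {h : A -> R | isMVhomTo01 A h}.

(* Continuity of F : Max A -> R for the subspace topology of the product
   topology on [0,1]^A, written out via basic product neighbourhoods
   (finitely many coordinates). *)
Definition contMax (A : deltaSig) (F : MaxA A -> R) : Prop :=
  forall (h : MaxA A) (eps : R), 0 < eps ->
    exists (l : list A) (d : R), 0 < d /\
      forall h' : MaxA A,
        (forall a, In a l -> Rabs (proj1_sig h' a - proj1_sig h a) < d) ->
        Rabs (F h' - F h) < eps.

Definition inC (A : deltaSig) (F : MaxA A -> R) : Prop :=
  contMax A F /\ forall h, 0 <= F h <= 1.

Definition Cplus (A : deltaSig) (F G : MaxA A -> R) : MaxA A -> R :=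
  fun h => uplus (F h) (G h).
Definition Cneg (A : deltaSig) (F : MaxA A -> R) : MaxA A -> R :=
  fun h => uneg (F h).
Definition Czero (A : deltaSig) : MaxA A -> R := fun _ => 0.
Definition Cdelta (A : deltaSig) (s : nat -> MaxA A -> R) : MaxA A -> R :=
  fun h => Series (fun n => s n h / 2 ^ (S n)).

Definition hat (A : deltaSig) (a : A) : MaxA A -> R := fun h => proj1_sig h a.

(* delta-homomorphisms C(Max A,[0,1]) -> B, given as maps on the ambient
   function space whose behaviour is only constrained on C(Max A,[0,1]). *)
Definition isDeltaHomFromC (A : deltaSig) (B : deltaSig)
    (f : (MaxA A -> R) -> B) : Prop :=
  (forall F G, inC A F -> inC A G -> f (Cplus A F G) = dplus B (f F) (f G)) /\
  (forall F, inC A F -> f (Cneg A F) = dneg B (f F)) /\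
  f (Czero A) = dzero B /\
  (forall s : nat -> MaxA A -> R, (forall n, inC A (s n)) ->
     f (Cdelta A s) = ddelta B (fun n => f (s n))).

Definition etaIsDeltaHom (A : deltaSig) : Prop :=
  (forall a, inC A (hat A a)) /\
  (forall a b, hat A (dplus A a b) = Cplus A (hat A a) (hat A b)) /\
  (forall a, hat A (dneg A a) = Cneg A (hat A a)) /\
  hat A (dzero A) = Czero A /\
  (forall s : nat -> A, hat A (ddelta A s) = Cdelta A (fun n => hat A (s n))).

(* Main.v *)
Require Import Defs.
From Stdlib Require Import Reals List.
From Coquelicot Require Import Coquelicot.
From Stdlib Require Import Lra Lia Classical FunctionalExtensionality IndefiniteDescription.
From HB Require Import structures.
From mathcomp Require all_boot all_order all_algebra all_classical all_reals topology normedtype Rstruct Rstruct_topology.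
Open Scope R_scope.

Lemma uplus_lip x y x' y' : Rabs (uplus x y - uplus x' y') <= Rabs (x - x') + Rabs (y - y').
Proof. unfold uplus, Rmin. destruct (Rle_dec 1 (x+y)), (Rle_dec 1 (x'+y')); split_Rabs; lra. Qed.

Lemma notM_open (A : deltaSig) (f : A -> R) : ~ isMVhomTo01 A f ->
  exists l d, 0 < d /\ forall g : A -> R,
    (forall a, In a l -> Rabs (g a - f a) < d) -> ~ isMVhomTo01 A g.
Proof.
  intro Hn. unfold isMVhomTo01 in Hn.
  destruct (classic (forall a, 0 <= f a <= 1)) as [Hr|Hr].
  2:{ apply not_all_ex_not in Hr. destruct Hr as [a Ha].
      destruct (Rlt_le_dec (f a) 0) as [H0|H0].
      - exists (a :: nil), (- f a). split. lra. intros g Hg [Hg1 _].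
        specialize (Hg a (or_introl eq_refl)). specialize (Hg1 a). split_Rabs; lra.
      - assert (f a > 1) by (destruct (Rle_dec (f a) 1); [exfalso; apply Ha; lra| lra]).
        exists (a :: nil), (f a - 1). split. lra. intros g Hg [Hg1 _].
        specialize (Hg a (or_introl eq_refl)). specialize (Hg1 a). split_Rabs; lra. }
  destruct (classic (forall a b, f (dplus A a b) = uplus (f a) (f b))) as [Hp|Hp].
  2:{ apply not_all_ex_not in Hp. destruct Hp as [a Hp]. apply not_all_ex_not in Hp. destruct Hp as [b Hp].
      set (m := Rabs (f (dplus A a b) - uplus (f a) (f b))).
      assert (Hm : 0 < m) by (unfold m; apply Rabs_pos_lt; intro; apply Hp; lra).
      exists (dplus A a b :: a :: b :: nil), (m / 3). split. lra.
      intros g Hg [_ [Hg2 _]].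
      pose proof (Hg _ (or_introl eq_refl)) as H1.
      pose proof (Hg a (or_intror (or_introl eq_refl))) as H2.
      pose proof (Hg b (or_intror (or_intror (or_introl eq_refl)))) as H3.
      pose proof (uplus_lip (g a) (g b) (f a) (f b)) as H4.
      rewrite Hg2 in H1. unfold m in *.
      revert H1 H2 H3 H4 Hm. generalize (uplus (g a) (g b)) (uplus (f a) (f b)) (f (dplus A a b)).
      intros. split_Rabs; lra. }
  destruct (classic (forall a, f (dneg A a) = uneg (f a))) as [Hq|Hq].
  2:{ apply not_all_ex_not in Hq. destruct Hq as [a Hq].
      set (m := Rabs (f (dneg A a) - uneg (f a))).
      assert (Hm : 0 < m) by (unfold m; apply Rabs_pos_lt; intro; apply Hq; lra).
      exists (dneg A a :: a :: nil), (m / 2). split. lra.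
      intros g Hg [_ [_ [Hg3 _]]].
      pose proof (Hg _ (or_introl eq_refl)) as H1.
      pose proof (Hg a (or_intror (or_introl eq_refl))) as H2.
      rewrite Hg3 in H1. unfold m, uneg in *. split_Rabs; lra. }
  assert (Hz : f (dzero A) <> 0) by (intro; apply Hn; tauto).
  exists (dzero A :: nil), (Rabs (f (dzero A))). split. apply Rabs_pos_lt; auto.
  intros g Hg [_ [_ [_ Hg4]]]. specialize (Hg _ (or_introl eq_refl)). rewrite Hg4 in Hg.
  split_Rabs; lra.
Qed.

Section Hom.
Variable A : deltaSig.
Variable h : A -> R.
Variable Hh : isMVhomTo01 A h.

Lemma h_range a : 0 <= h a <= 1. Proof. apply Hh. Qed.
Lemma h_plus a b : h (dplus A a b) = Rmin 1 (h a + h b). Proof. apply Hh. Qed.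
Lemma h_neg a : h (dneg A a) = 1 - h a. Proof. apply Hh. Qed.
Lemma h_zero : h (dzero A) = 0. Proof. apply Hh. Qed.
Lemma h_one : h (done A) = 1. Proof. unfold done. rewrite h_neg, h_zero. lra. Qed.

Ltac mm := unfold Rmin, Rmax in *; repeat match goal with |- context [Rle_dec ?a ?b] => destruct (Rle_dec a b) | H : context [Rle_dec ?a ?b] |- _ => destruct (Rle_dec a b) end; try lra.

Lemma h_ominus a b : h (dominus A a b) = Rmax 0 (h a - h b).
Proof. unfold dominus, dodot. rewrite !h_neg, h_plus, !h_neg.
  pose proof (h_range a); pose proof (h_range b). mm. Qed.
Lemma h_odot a b : h (dodot A a b) = Rmax 0 (h a + h b - 1).
Proof. unfold dodot. rewrite !h_neg, h_plus, !h_neg.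
  pose proof (h_range a); pose proof (h_range b). mm. Qed.
Lemma h_join a b : h (djoin A a b) = Rmax (h a) (h b).
Proof. unfold djoin. rewrite h_plus, h_neg, h_plus, h_neg.
  pose proof (h_range a); pose proof (h_range b). mm. Qed.
Definition dmeet (a b : A) : A := dneg A (djoin A (dneg A a) (dneg A b)).
Lemma h_meet a b : h (dmeet a b) = Rmin (h a) (h b).
Proof. unfold dmeet. rewrite h_neg, h_join, !h_neg.
  pose proof (h_range a); pose proof (h_range b). mm. Qed.
Lemma h_dist a b : h (ddist A a b) = Rabs (h a - h b).
Proof. unfold ddist. rewrite h_plus, !h_ominus.
  pose proof (h_range a); pose proof (h_range b). unfold Rabs; destruct (Rcase_abs (h a - h b)); mm. Qed.
Lemma h_le a b : dle A a b -> h a <= h b.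
Proof. unfold dle. intro H. rewrite <- H, h_join. apply Rmax_l. Qed.

Fixpoint nfold (n : nat) (a : A) : A :=
  match n with O => dzero A | S m => dplus A a (nfold m a) end.
Lemma h_nfold n a : h (nfold n a) = Rmin 1 (INR n * h a).
Proof. induction n; simpl nfold.
  - rewrite h_zero. simpl. mm.
  - rewrite h_plus, IHn, S_INR. pose proof (h_range a). pose proof (pos_INR n).
    assert (0 <= INR n * h a) by (apply Rmult_le_pos; lra). mm; nra. Qed.
End Hom.

Lemma lim_series (a : nat -> R) (l : R) : is_lim_seq (sum_n a) l -> is_series a l.
Proof. intro H. exact H. Qed.
Lemma series_lim (a : nat -> R) (l : R) : is_series a l -> is_lim_seq (sum_n a) l.
Proof. intro H. exact H. Qed.

Lemma sum_n_S (a : nat -> R) n : sum_n a (S n) = sum_n a n + a (S n).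
Proof. rewrite sum_Sn. reflexivity. Qed.

Lemma geom_half : is_lim_seq (fun n => / 2 ^ S n) 0.
Proof.
  apply is_lim_seq_ext with (fun n => (/2) ^ S n).
  { intro n. rewrite pow_inv. reflexivity. }
  apply (is_lim_seq_incr_1 (fun n => (/2)^n)). apply is_lim_seq_geom.
  rewrite Rabs_pos_eq; lra.
Qed.

Lemma pow2_gt0 n : 0 < 2 ^ n. Proof. apply pow_lt. lra. Qed.

Lemma series_rec (x t : nat -> R) : (forall n, 0 <= t n <= 1) ->
  (forall n, t n = x n / 2 + t (S n) / 2) ->
  is_series (fun n => x n / 2 ^ S n) (t O).
Proof.
  intros Ht Hr.
  assert (Hp : forall n, sum_n (fun k => x k / 2 ^ S k) n = t O - t (S n) / 2 ^ S n).
  { induction n.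
    - rewrite sum_O. rewrite (Hr O). simpl. match goal with |- @eq _ ?a ?b => change (@eq R a b) end. field.
    - rewrite sum_n_S, IHn. rewrite (Hr (S n)).
      pose proof (pow2_gt0 n). simpl (2 ^ S (S n)); simpl (2 ^ S n). set (p := 2 ^ n) in *. match goal with |- @eq _ ?a ?b => change (@eq R a b) end. field. lra. }
  apply lim_series. apply is_lim_seq_ext with (fun n => t O - t (S n) / 2 ^ S n).
  { intro n. rewrite Hp. reflexivity. }
  assert (Hl : is_lim_seq (fun n => t (S n) / 2 ^ S n) 0).
  2:{ pose proof (is_lim_seq_minus' _ _ _ _ (is_lim_seq_const (t O)) Hl) as H.
      rewrite Rminus_0_r in H. exact H. }
  apply is_lim_seq_le_le with (fun _ => 0) (fun n => / 2 ^ S n).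
  - intro n. pose proof (pow2_gt0 (S n)). specialize (Ht (S n)). split.
    + apply Rmult_le_pos. lra. left; apply Rinv_0_lt_compat; lra.
    + unfold Rdiv. rewrite <- (Rmult_1_l (/ 2 ^ S n)) at 2. apply Rmult_le_compat_r.
      left; apply Rinv_0_lt_compat; lra. lra.
  - apply is_lim_seq_const.
  - apply geom_half.
Qed.

Section Delta.
Variable A : deltaAlgebra.
Variable h : A -> R.
Variable Hh : isMVhomTo01 A h.

Lemma half_le x : dle A (dhalf A x) x.
Proof.
  destruct (daxioms A) as [[Hassoc [Hcomm [H0 [Hnn [H1 Hluk]]]]] [Hi [Hii [Hiii [Hiv [Hv Hvi]]]]]].
  pose proof (Hv (fun n => match n with O => x | S _ => dzero A end)
                 (fun n => match n with O => dzero A | S _ => x end)) as H. cbv beta in H.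
  replace (fun n : nat => dplus A (match n with O => x | S _ => dzero A end)
                                  (match n with O => dzero A | S _ => x end)) with (fun _ : nat => x) in H.
  - rewrite Hiii in H. exact H.
  - extensionality n. destruct n; simpl. rewrite H0; auto. rewrite Hcomm, H0; auto.
Qed.

Lemma h_half x : h (dhalf A x) = h x / 2.
Proof.
  destruct (daxioms A) as [[Hassoc [Hcomm [H0 [Hnn [H1 Hluk]]]]] [Hi [Hii [Hiii [Hiv [Hv Hvi]]]]]].
  pose proof (Hi (fun _ => x)) as E1. cbv beta in E1. rewrite Hiii in E1.
  pose proof (Hiv (fun _ => x)) as E2. cbv beta in E2. rewrite Hiii in E2.
  rewrite E2 in E1.
  assert (E3 : h (ddist A x (dhalf A x)) = h (dhalf A x)) by (unfold dhalf; rewrite E1; reflexivity).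
  rewrite (h_dist A h Hh) in E3.
  pose proof (h_le A h Hh _ _ (half_le x)).
  rewrite Rabs_pos_eq in E3 by lra. lra.
Qed.

Lemma delta_rec (s : nat -> A) :
  h (ddelta A s) = h (s O) / 2 + h (ddelta A (fun m => s (S m))) / 2.
Proof.
  destruct (daxioms A) as [[Hassoc [Hcomm [H0 [Hnn [H1 Hluk]]]]] [Hi [Hii [Hiii [Hiv [Hv Hvi]]]]]].
  pose proof (Hv (fun n => match n with O => s O | S _ => dzero A end)
                 (fun n => match n with O => dzero A | S _ => s n end)) as H. cbv beta in H.
  replace (fun n : nat => dplus A (match n with O => s O | S _ => dzero A end)
                                  (match n with O => dzero A | S _ => s n end)) with s in H.
  2:{ extensionality n. destruct n; simpl. rewrite H0; auto. rewrite Hcomm, H0; auto. }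
  pose proof (h_le A h Hh _ _ H) as Hle.
  change (h (dhalf A (s O)) <= h (ddelta A s)) in Hle. rewrite h_half in Hle.
  pose proof (Hi s) as E1.
  replace (fun n : nat => match n with O => dzero A | S _ => s n end)
    with (fun n : nat => match n with O => dzero A | S m => (fun m => s (S m)) m end) in E1.
  2:{ extensionality n. destruct n; reflexivity. }
  rewrite Hiv in E1.
  assert (E3 : h (ddist A (ddelta A s) (dhalf A (s O))) = h (dhalf A (ddelta A (fun m => s (S m)))))
    by (unfold dhalf at 1; rewrite E1; reflexivity).
  rewrite (h_dist A h Hh), !h_half in E3.
  rewrite Rabs_pos_eq in E3 by lra. lra.
Qed.

Lemma hdelta_series (s : nat -> A) :
  is_series (fun n => h (s n) / 2 ^ S n) (h (ddelta A s)).
Proof.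
  exact (series_rec (fun n => h (s n)) (fun n => h (ddelta A (fun m => s (n + m)%nat)))
    (fun n => h_range A h Hh _)
    (fun n => eq_trans (delta_rec _)
       (f_equal2 (fun u v => h u / 2 + h (ddelta A v) / 2)
          (f_equal s (Nat.add_0_r n))
          (functional_extensionality _ _ (fun m => f_equal s (Nat.add_succ_r n m)))))).
Qed.
End Delta.

Close Scope R_scope.
Module Cpt.
Import all_boot all_order all_algebra all_classical all_reals topology normedtype Rstruct Rstruct_topology.
Import numFieldNormedType.Exports.
Import ArrowAsProduct.
Local Open Scope classical_set_scope.
Definition gT (T : Type) := T.
HB.instance Definition _ (T : Type) := gen_eqMixin (gT T).
HB.instance Definition _ (T : Type) := gen_choiceMixin (gT T).
HB.instance Definition _ (T:Type) := isPointed.Build (gT T -> R) (fun _ => 0%R).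

Lemma nbhs_fin (T : Type) (f : gT T -> R) (l : list T) (d : R) : Rlt 0 d ->
  nbhs f [set g : gT T -> R | forall a, In a l -> Rlt (Rabs (Rminus (g a) (f a))) d].
Proof.
move=> d0; elim: l => [|a l IH].
  by apply: filterS filterT => g _ a [].
have H1 : nbhs f [set g : gT T -> R | Rlt (Rabs (Rminus (g a) (f a))) d].
  have := @proj_continuous (gT T) (fun _ => R) a f.
  move=> /(_ (ball (f a) d)) H; have Hb := H (nbhsx_ballx (f a) d (introT RltP d0)).
  have Hb' : nbhs f (proj a @^-1` ball (f a) d) := Hb.
  apply: filterS Hb' => g /=. rewrite /ball /= /proj => /RltP H1.
  by rewrite Rabs_minus_sym; exact: H1.
have H2 := @filterI _ (nbhs f) (nbhs_filter f) _ _ H1 IH.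
eapply filterS; last exact H2. move=> g [Ha Hl] b /= [<-|Hb]; [exact: Ha| exact: Hl].
Qed.

Lemma bridge (T : Type) (U : set (gT T -> R)) :
  (forall f, U f -> exists l d, Rlt 0 d /\ forall g, (forall a, In a l -> Rlt (Rabs (Rminus (g a) (f a))) d) -> U g) ->
  open U.
Proof.
move=> HU; rewrite openE => f Uf.
have [l [d [d0 Hd]]] := HU f Uf.
have H := @nbhs_fin T f l d d0. rewrite /interior. eapply filterS; last exact H. move=> g; apply: Hd.
Qed.

Lemma MaxA_compact (A : deltaSig) (I : Type) (U : I -> MaxA A -> Prop) :
  (forall i h, U i h -> exists l d, Rlt 0 d /\ forall h' : MaxA A,
      (forall a, In a l -> Rlt (Rabs (Rminus (proj1_sig h' a) (proj1_sig h a))) d) -> U i h') ->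
  (forall h, exists i, U i h) -> exists li : list I, forall h, exists i, In i li /\ U i h.
Proof.
move=> Uo Ucov.
pose M : set (gT A -> R) := [set f | isMVhomTo01 A f].
have Kc : compact [set f : gT A -> R | forall i, (`[0%R, 1%R] : set R) (f i)].
  apply: (@tychonoff (gT A) (fun _ => R) (fun _ => `[0%R, 1%R])) => i.
  exact: segment_compact.
have Mc : compact M.
  apply: (subclosed_compact _ Kc).
    rewrite -[M]setCK; apply: open_closedC; apply: bridge => f /= Hf.
    have [l [d [d0 Hd]]] := @notM_open A f Hf.
    by exists l, d; split => // g Hg; apply: Hd.
  move=> f [Hr _] i /=; rewrite in_itv /=; have [H1 H2] := Hr i.
  by apply/andP; split; apply/RleP.
move: Mc; rewrite compact_cover => Mc.
pose W (i : gT I) : set (gT A -> R) := [set g | exists l d, Rlt 0 d /\ forall h' : MaxA A,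
      (forall a, In a l -> Rlt (Rabs (Rminus (proj1_sig h' a) (g a))) d) -> U i h'].
have Wo : forall i, setT i -> open (W i).
  move=> i _; apply: bridge => g [l [d [d0 Hd]]].
  exists l, (Rdiv d 2); split; first lra.
  move=> g' Hg'; exists l, (Rdiv d 2); split; first lra.
  move=> h' Hh'; apply: Hd => a Ha.
  have := Hg' a Ha; have := Hh' a Ha.
  move=> X Y; clear -X Y; split_Rabs; lra.
have Mcov : M `<=` cover setT W.
  move=> f Mf; have [i Hi] := Ucov (exist _ f Mf).
  have [l [d [d0 Hd]]] := Uo i _ Hi.
  by exists i => //; exists l, d; split => // h' Hh'; apply: Hd.
have [D' _ HD'] := Mc (gT I) setT W Wo Mcov.
exists (finmap.enum_fset D') => h.
have [i Di [l [d [d0 Hd]]]] := HD' _ (proj2_sig h).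
exists i; split.
  move: Di => /= Di; have : i \in finmap.enum_fset D' := Di; clear Di HD'.
  elim: (finmap.enum_fset D') => //= y s IH; rewrite inE => /orP [/eqP->|H]; [by left| right; exact: IH].
apply: Hd => a _; rewrite Rminus_diag Rabs_R0; exact: d0.
Qed.
End Cpt.

Open Scope R_scope.

Section Main.
Variable A : deltaAlgebra.

Definition hv (h : MaxA A) (a : A) : R := proj1_sig h a.
Definition Hv (h : MaxA A) : isMVhomTo01 A (proj1_sig h) := proj2_sig h.

Lemma contMax_hat a : contMax A (hat A a).
Proof. intros h eps Heps. exists (a :: nil), eps. split; auto.
  intros h' H. apply H. left; auto. Qed.

Lemma contMax_addc (F : MaxA A -> R) c : contMax A F -> contMax A (fun z => F z + c).
Proof. intros HF h eps Heps. destruct (HF h eps Heps) as [l [d [Hd H]]].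
  exists l, d. split; auto. intros h' H'. specialize (H h' H').
  replace (F h' + c - (F h + c)) with (F h' - F h) by ring. auto. Qed.

Lemma open_lt (P Q : MaxA A -> R) (C : Prop) : contMax A P -> contMax A Q ->
  forall h, P h < Q h /\ C -> exists l d, 0 < d /\ forall h' : MaxA A,
    (forall a, In a l -> Rabs (proj1_sig h' a - proj1_sig h a) < d) -> P h' < Q h' /\ C.
Proof.
  intros HP HQ h [Hlt HC].
  set (m := Q h - P h).
  destruct (HP h (m/2)) as [l1 [d1 [Hd1 H1]]]. unfold m; lra.
  destruct (HQ h (m/2)) as [l2 [d2 [Hd2 H2]]]. unfold m; lra.
  exists (l1 ++ l2), (Rmin d1 d2). split. apply Rmin_glb_lt; auto.
  intros h' Hh'. split; auto.
  assert (A1 : Rabs (P h' - P h) < m / 2).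
  { apply H1. intros a Ha. eapply Rlt_le_trans. apply Hh'. apply in_or_app; auto. apply Rmin_l. }
  assert (A2 : Rabs (Q h' - Q h) < m / 2).
  { apply H2. intros a Ha. eapply Rlt_le_trans. apply Hh'. apply in_or_app; auto. apply Rmin_r. }
  unfold m in *. split_Rabs; lra.
Qed.

Fixpoint rr (r : R) (n : nat) : R :=
  match n with O => r | S m => if Rle_dec (/2) (rr r m) then 2 * rr r m - 1 else 2 * rr r m end.

Lemma rr_range r : 0 <= r <= 1 -> forall n, 0 <= rr r n <= 1.
Proof. intros Hr n. induction n; simpl; auto. destruct (Rle_dec (/2) (rr r n)); lra. Qed.

Definition kconst (r : R) : A :=
  ddelta A (fun n => if Rle_dec (/2) (rr r n) then done A else dzero A).

Lemma h_kconst (h : A -> R) (Hh : isMVhomTo01 A h) r : 0 <= r <= 1 -> h (kconst r) = r.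
Proof.
  intro Hr.
  pose proof (hdelta_series A h Hh (fun n => if Rle_dec (/2) (rr r n) then done A else dzero A)) as S1.
  pose proof (series_rec (fun n => h (if Rle_dec (/2) (rr r n) then done A else dzero A)) (rr r)
     (rr_range r Hr)) as S2.
  assert (S3 : is_series (fun n => h (if Rle_dec (/2) (rr r n) then done A else dzero A) / 2 ^ S n) r).
  { apply S2. intro n. simpl. destruct (Rle_dec (/2) (rr r n)).
    - rewrite (h_one A h Hh). lra.
    - rewrite (h_zero A h Hh). lra. }
  apply is_series_unique in S1. apply is_series_unique in S3.
  unfold kconst. rewrite <- S1, S3. reflexivity.
Qed.

Lemma sep (x y : MaxA A) (c : A) : hv x c < hv y c ->
  exists u, hv x u = 0 /\ hv y u = 1.
Proof.
  intro Hc. unfold hv in *.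
  pose proof (h_range A _ (Hv x) c). pose proof (h_range A _ (Hv y) c).
  set (r := (proj1_sig x c + proj1_sig y c) / 2).
  assert (Hr : 0 <= r <= 1) by (unfold r; lra).
  set (v := dominus A c (kconst r)).
  assert (Vx : proj1_sig x v = 0).
  { unfold v. rewrite (h_ominus A _ (Hv x)), (h_kconst _ (Hv x) r Hr). unfold r, Rmax.
    destruct (Rle_dec 0 _); lra. }
  assert (Vy : proj1_sig y v = (proj1_sig y c - proj1_sig x c) / 2).
  { unfold v. rewrite (h_ominus A _ (Hv y)), (h_kconst _ (Hv y) r Hr). unfold r, Rmax.
    destruct (Rle_dec 0 _); lra. }
  set (m := (proj1_sig y c - proj1_sig x c) / 2).
  assert (Hm : 0 < m) by (unfold m; lra).
  destruct (nfloor_ex (/ m)) as [n [_ Hn]]. left; apply Rinv_0_lt_compat; auto.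
  exists (nfold A (S n) v). split.
  - rewrite (h_nfold A _ (Hv x)), Vx. rewrite Rmult_0_r. unfold Rmin. destruct (Rle_dec 1 0); lra.
  - rewrite (h_nfold A _ (Hv y)), Vy. fold m. rewrite S_INR.
    assert (1 <= (INR n + 1) * m).
    { apply Rmult_lt_compat_r with (r := m) in Hn; auto. rewrite Rinv_l in Hn; lra. }
    unfold Rmin. destruct (Rle_dec 1 _); lra.
Qed.

Lemma two_point (F : MaxA A -> R) (HF : inC A F) eps (He : 0 < eps) (x y : MaxA A) :
  exists a, Rabs (hv x a - F x) < eps /\ Rabs (hv y a - F y) < eps.
Proof.
  destruct HF as [HFc HFr].
  destruct (classic (exists c, hv x c <> hv y c)) as [[c Hc]|Hn].
  - assert (Hu : exists u, hv x u = 0 /\ hv y u = 1).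
    { destruct (Rlt_le_dec (hv x c) (hv y c)).
      - apply (sep x y c); auto.
      - destruct (sep y x c) as [u [U1 U2]]. lra.
        exists (dneg A u). unfold hv in *. rewrite (h_neg A _ (Hv x)), (h_neg A _ (Hv y)). lra. }
    destruct Hu as [u [Ux Uy]].
    exists (dplus A (dodot A u (kconst (F y))) (dodot A (dneg A u) (kconst (F x)))).
    unfold hv in *.
    rewrite (h_plus A _ (Hv x)), (h_plus A _ (Hv y)), !(h_odot A _ (Hv x)), !(h_odot A _ (Hv y)),
      (h_neg A _ (Hv x)), (h_neg A _ (Hv y)), !(h_kconst _ (Hv x)), !(h_kconst _ (Hv y)) by auto.
    rewrite Ux, Uy. pose proof (HFr x). pose proof (HFr y).
    unfold Rmin, Rmax; repeat match goal with |- context [Rle_dec ?a ?b] => destruct (Rle_dec a b) | H : context [Rle_dec ?a ?b] |- _ => destruct (Rle_dec a b) end;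
      split; split_Rabs; lra.
  - exists (kconst (F x)). unfold hv. rewrite (h_kconst _ (Hv x)), (h_kconst _ (Hv y)) by auto.
    split. rewrite Rminus_diag, Rabs_R0; auto.
    destruct (HFc x eps He) as [l [d [Hd H]]].
    rewrite Rabs_minus_sym. apply H. intros a _.
    assert (proj1_sig y a = proj1_sig x a).
    { destruct (Req_dec (proj1_sig y a) (proj1_sig x a)); auto. exfalso. apply Hn. exists a. unfold hv; auto. }
    rewrite H0, Rminus_diag, Rabs_R0; auto.
Qed.

Lemma density (F : MaxA A -> R) (HF : inC A F) eps (He : 0 < eps) :
  exists a, forall h, Rabs (hv h a - F h) < eps.
Proof.
  assert (Step1 : forall x, exists g, F x - eps < hv x g /\ forall z, hv z g < F z + eps).
  { intro x.
    destruct (Cpt.MaxA_compact A A (fun a z => hat A a z < F z + eps /\ F x - eps < hv x a)) as [la Hla].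
    - intros a z Hz. apply (open_lt (hat A a) (fun z => F z + eps)); auto.
      apply contMax_hat. apply contMax_addc. apply HF.
    - intro z. destruct (two_point F HF eps He x z) as [a [H1 H2]]. exists a.
      unfold hat. unfold hv in *. split; split_Rabs; lra.
    - assert (Gen : forall l : list A, exists g, F x - eps < hv x g /\ forall z,
         (exists a, In a l /\ (hat A a z < F z + eps /\ F x - eps < hv x a)) -> hv z g < F z + eps).
      { induction l as [|a l IH].
        - exists (done A). split. unfold hv. rewrite (h_one A _ (Hv x)). pose proof (proj2 HF x); lra.
          intros z [a [[] _]].
        - destruct IH as [g [G1 G2]].
          destruct (classic (F x - eps < hv x a)) as [Ca|Ca].
          + exists (dmeet A a g). unfold hv in *. rewrite (h_meet A _ (Hv x)). split.
            unfold Rmin; destruct (Rle_dec _ _); lra.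
            intros z [b [[Hb|Hb] [Hz1 Hz2]]].
            * subst b. rewrite (h_meet A _ (Hv z)). unfold hat in Hz1.
              pose proof (Rmin_l (proj1_sig z a) (proj1_sig z g)). lra.
            * rewrite (h_meet A _ (Hv z)). pose proof (G2 z (ex_intro _ b (conj Hb (conj Hz1 Hz2)))).
              pose proof (Rmin_r (proj1_sig z a) (proj1_sig z g)). lra.
          + exists g. split; auto. intros z [b [[Hb|Hb] [Hz1 Hz2]]].
            * subst b. contradiction.
            * apply G2. exists b; auto. }
      destruct (Gen la) as [g [G1 G2]]. exists g. split; [exact G1|].
      intro z. apply G2. destruct (Hla z) as [a [Ha Hz]]. exists a; auto. }
  destruct (Cpt.MaxA_compact A A (fun g z => F z - eps < hat A g z /\ forall z', hv z' g < F z' + eps)) as [lg Hlg].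
  - intros g z Hz. destruct Hz as [Hz1 Hz2].
    apply (open_lt (fun z => F z + - eps) (hat A g) (forall z', hv z' g < F z' + eps)).
    + apply contMax_addc. apply HF.
    + apply contMax_hat.
    + split; auto.
  - intro z. destruct (Step1 z) as [g [G1 G2]]. exists g. split; auto.
  - assert (Gen : forall l : list A, exists G, (forall z, (exists g, In g l /\ (F z - eps < hat A g z /\ forall z', hv z' g < F z' + eps)) -> F z - eps < hv z G) /\ forall z, hv z G < F z + eps).
    { induction l as [|g l IH].
      - exists (dzero A). split. intros z [g [[] _]].
        intro z. unfold hv. rewrite (h_zero A _ (Hv z)). pose proof (proj2 HF z); lra.
      - destruct IH as [G [G1 G2]].
        destruct (classic (forall z', hv z' g < F z' + eps)) as [Cg|Cg].
        + exists (djoin A g G). unfold hv in *. split.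
          * intros z [b [[Hb|Hb] [Hz1 Hz2]]].
            -- subst b. rewrite (h_join A _ (Hv z)). unfold hat in Hz1.
               pose proof (Rmax_l (proj1_sig z g) (proj1_sig z G)). lra.
            -- rewrite (h_join A _ (Hv z)). pose proof (G1 z (ex_intro _ b (conj Hb (conj Hz1 Hz2)))).
               pose proof (Rmax_r (proj1_sig z g) (proj1_sig z G)). lra.
          * intro z. rewrite (h_join A _ (Hv z)). pose proof (Cg z). pose proof (G2 z).
            unfold Rmax; destruct (Rle_dec _ _); lra.
        + exists G. split; auto. intros z [b [[Hb|Hb] [Hz1 Hz2]]].
          * subst b. contradiction.
          * apply G1. exists b; auto. }
    destruct (Gen lg) as [G [G1 G2]]. exists G. intro z.
    assert (F z - eps < hv z G). { apply G1. destruct (Hlg z) as [g [Hg Hz]]. exists g; auto. }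
    pose proof (G2 z). split_Rabs; lra.
Qed.
End Main.

Lemma telescope (u : nat -> R) (L : R) : is_lim_seq u L ->
  is_series (fun k => u (S k) - u k) (L - u O).
Proof.
  intro Hu. apply lim_series.
  apply is_lim_seq_ext with (fun n => u (S n) - u O).
  { intro n. induction n. rewrite sum_O. reflexivity.
    rewrite sum_n_S, <- IHn. ring. }
  apply is_lim_seq_minus'. apply (is_lim_seq_incr_1 u). auto. apply is_lim_seq_const.
Qed.

Lemma series_sub (a b : nat -> R) la lb : is_series a la -> is_series b lb ->
  is_series (fun n => a n - b n) (la - lb).
Proof. intros Ha Hb. exact (is_series_minus a b la lb Ha Hb). Qed.

Section Surj.
Variable A : deltaAlgebra.

Lemma surj (F : MaxA A -> R) (HF : inC A F) : exists c, hat A c = F.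
Proof.
  assert (H : forall k, exists a, forall h, Rabs (hv A h a - F h) < / 4 * / 2 ^ S k).
  { intro k. apply density; auto. pose proof (pow2_gt0 (S k)).
    apply Rmult_lt_0_compat; apply Rinv_0_lt_compat; lra. }
  set (a := fun k => proj1_sig (constructive_indefinite_description _ (H k))).
  assert (Ha : forall k h, Rabs (hv A h (a k) - F h) < / 4 * / 2 ^ S k).
  { intros k h. unfold a. destruct (constructive_indefinite_description _ (H k)); simpl; auto. }
  set (p := fun k => nfold A (2 ^ S k)%nat (dominus A (a (S k)) (a k))).
  set (n := fun k => nfold A (2 ^ S k)%nat (dominus A (a k) (a (S k)))).
  set (P := ddelta A p). set (N := ddelta A n).
  set (b := dominus A (dplus A (dhalf A (a O)) (dhalf A P)) (dhalf A N)).
  exists (dplus A b b).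
  extensionality h. unfold hat.
  pose proof (Hv A h) as Hh.
  set (u := fun k => proj1_sig h (a k)).
  assert (Hd : forall k, Rabs (u (S k) - u k) < / 4 * (3 / 2 ^ S (S k))).
  { intro k. pose proof (Ha k h). pose proof (Ha (S k) h). unfold hv in *. fold (u k) (u (S k)) in *.
    pose proof (pow2_gt0 (S k)). simpl (2 ^ S (S k)) in *. simpl (2 ^ S k) in *.
    set (q := 2 ^ k) in *.
    assert (E1 : / 4 * / (2 * q) = 2 * (/4 * / (2 * (2 * q)))) by (field; lra).
    rewrite E1 in H0. unfold Rdiv. rewrite Rmult_comm with (r1 := 3). split_Rabs; lra. }
  assert (Hp : forall k, proj1_sig h (p k) / 2 ^ S k = Rmax 0 (u (S k) - u k)).
  { intro k. unfold p. rewrite (h_nfold A _ Hh), (h_ominus A _ Hh). rewrite pow_INR.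
    replace (INR 2) with 2 by (simpl; ring). fold (u k) (u (S k)).
    pose proof (pow2_gt0 (S k)). specialize (Hd k).
    assert (Hb : 2 ^ S k * Rmax 0 (u (S k) - u k) <= 1).
    { simpl (2 ^ S (S k)) in Hd. simpl (2 ^ S k) in *. set (q := 2 ^ k) in *.
      assert (Rmax 0 (u (S k) - u k) <= 3 / (16 * q)).
      { unfold Rmax. destruct (Rle_dec _ _). split_Rabs.
        apply Rlt_le. replace (3 / (16 * q)) with (/4 * (3 / (2 * (2 * q)))) by (field; lra). lra.
        replace (3 / (16 * q)) with (/4 * (3 / (2 * (2 * q)))) by (field; lra). lra.
        left. apply Rdiv_lt_0_compat; lra. }
      apply Rmult_le_compat_l with (r := 2 * q) in H1; [|lra].
      replace (2 * q * (3 / (16 * q))) with (3/8) in H1 by (field; lra). lra. }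
    unfold Rmin. destruct (Rle_dec 1 _); [|field; lra].
    assert (2 ^ S k * Rmax 0 (u (S k) - u k) = 1) by lra. rewrite <- H1. field. lra. }
  assert (Hn : forall k, proj1_sig h (n k) / 2 ^ S k = Rmax 0 (u k - u (S k))).
  { intro k. unfold n. rewrite (h_nfold A _ Hh), (h_ominus A _ Hh). rewrite pow_INR.
    replace (INR 2) with 2 by (simpl; ring). fold (u k) (u (S k)).
    pose proof (pow2_gt0 (S k)). specialize (Hd k).
    assert (Hb : 2 ^ S k * Rmax 0 (u k - u (S k)) <= 1).
    { simpl (2 ^ S (S k)) in Hd. simpl (2 ^ S k) in *. set (q := 2 ^ k) in *.
      assert (Rmax 0 (u k - u (S k)) <= 3 / (16 * q)).
      { unfold Rmax. destruct (Rle_dec _ _). split_Rabs.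
        replace (3 / (16 * q)) with (/4 * (3 / (2 * (2 * q)))) by (field; lra). lra.
        replace (3 / (16 * q)) with (/4 * (3 / (2 * (2 * q)))) by (field; lra). lra.
        left. apply Rdiv_lt_0_compat; lra. }
      apply Rmult_le_compat_l with (r := 2 * q) in H1; [|lra].
      replace (2 * q * (3 / (16 * q))) with (3/8) in H1 by (field; lra). lra. }
    unfold Rmin. destruct (Rle_dec 1 _); [|field; lra].
    assert (2 ^ S k * Rmax 0 (u k - u (S k)) = 1) by lra. rewrite <- H1. field. lra. }
  assert (SP : is_series (fun k => Rmax 0 (u (S k) - u k)) (proj1_sig h P)).
  { apply is_series_ext with (fun k => proj1_sig h (p k) / 2 ^ S k). auto.
    apply (hdelta_series A _ Hh). }
  assert (SN : is_series (fun k => Rmax 0 (u k - u (S k))) (proj1_sig h N)).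
  { apply is_series_ext with (fun k => proj1_sig h (n k) / 2 ^ S k). auto.
    apply (hdelta_series A _ Hh). }
  assert (Hlim : is_lim_seq u (F h)).
  { apply is_lim_seq_le_le with (fun k => F h - / 4 * / 2 ^ S k) (fun k => F h + / 4 * / 2 ^ S k).
    - intro k. pose proof (Ha k h). unfold hv in H0. fold (u k) in H0. split_Rabs; lra.
    - replace (F h) with (F h - /4 * 0) at 1 by ring.
      apply is_lim_seq_minus'. apply is_lim_seq_const.
      apply (is_lim_seq_scal_l _ (/4) 0). apply geom_half.
    - replace (F h) with (F h + /4 * 0) at 1 by ring.
      apply is_lim_seq_plus'. apply is_lim_seq_const.
      apply (is_lim_seq_scal_l _ (/4) 0). apply geom_half. }
  pose proof (telescope u (F h) Hlim) as ST.
  pose proof (series_sub _ _ _ _ SP SN) as SD.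
  assert (E : proj1_sig h P - proj1_sig h N = F h - u O).
  { apply is_series_unique in ST. apply is_series_unique in SD. rewrite <- ST, <- SD.
    apply Series_ext. intro k. unfold Rmax. destruct (Rle_dec 0 _), (Rle_dec 0 _); lra. }
  pose proof (proj2 HF h) as HFh.
  pose proof (h_range A _ Hh P). pose proof (h_range A _ Hh N). pose proof (h_range A _ Hh (a O)).
  assert (Eb : proj1_sig h b = F h / 2).
  { unfold b. rewrite (h_ominus A _ Hh), (h_plus A _ Hh), !(h_half A _ Hh).
    fold (u O) in *. unfold Rmin, Rmax. destruct (Rle_dec 1 _); destruct (Rle_dec 0 _); lra. }
  rewrite (h_plus A _ Hh), Eb. unfold Rmin. destruct (Rle_dec 1 _); lra.
Qed.
End Surj.

Theorem mainTheorem8 (A : deltaAlgebra) :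
  etaIsDeltaHom A /\
  (forall (B : deltaAlgebra) (f g : (MaxA A -> R) -> B),
     isDeltaHomFromC A B f -> isDeltaHomFromC A B g ->
     (forall a : A, f (hat A a) = g (hat A a)) ->
     forall F : MaxA A -> R, inC A F -> f F = g F).
Proof.
  split.
  - split; [|split; [|split; [|split]]].
    + intro a. split. apply contMax_hat. intro h. apply (h_range A _ (Hv A h)).
    + intros a b. extensionality h. unfold hat, Cplus. apply (h_plus A _ (Hv A h)).
    + intro a. extensionality h. unfold hat, Cneg. apply (h_neg A _ (Hv A h)).
    + extensionality h. unfold hat, Czero. apply (h_zero A _ (Hv A h)).
    + intro s. extensionality h. unfold hat, Cdelta. symmetry. apply is_series_unique.
      apply (hdelta_series A _ (Hv A h)).
  - intros B f g _ _ Hfg F HF. destruct (surj A F HF) as [c Hc]. rewrite <- Hc. apply Hfg.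
Qed.
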